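(* Let $(R,\mathfrak{m})$ be a Gorenstein local ring, let $q$ be a prime power and $k$ a positive integer. Suppose $\mathfrak{m}^2\neq(0)$, $\mathfrak{m}^3=(0)$, $|R/\mathfrak{m}|=q$, and $\dim_{R/\mathfrak{m}}(\mathfrak{m}/\mathfrak{m}^2)=k>6$. Then $\mathbb{AG}(R)$ contains a subgraph isomorphic to the complete bipartite graph $K_{k-6,3}$.
   Context: All rings are commutative with $1\neq 0$. A Noetherian local ring $(R,\mathfrak{m})$ is called Gorenstein if $\dim_{R/\mathfrak{m}}\operatorname{Ann}(\mathfrak{m})=1$. An ideal $I$ of $R$ is an annihilating-ideal if $IJ=(0)$ for some nonzero ideal $J$ of $R$. The annihilating-ideal graph $\mathbb{AG}(R)$ is the simple graph whose vertices are the nonzero annihilating-ideals of $R$, with distinct vertices $I,J$ adjacent iff $IJ=(0)$. *)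

(* Defs.v *)
(* Ideals of a (possibly infinite) commutative ring are
   modelled as Prop-valued subsets R -> Prop, compared extensionally. *)
From HB Require Import structures.
From mathcomp Require Import all_boot all_order all_algebra.
Set Implicit Arguments. Unset Strict Implicit. Unset Printing Implicit Defensive.
Import GRing.Theory.
Local Open Scope ring_scope.

Section Ideals.
Variable R : comNzRingType.

Definition subsetR (I J : R -> Prop) : Prop := forall x, I x -> J x.
Definition seteqR (I J : R -> Prop) : Prop := forall x, I x <-> J x.

Definition is_ideal (I : R -> Prop) : Prop :=
  [/\ I 0, (forall x y, I x -> I y -> I (x + y)) & (forall r x, I x -> I (r * x))].

Definition is_zero_set (I : R -> Prop) : Prop := forall x, I x -> x = 0.
Definition nonzero_set (I : R -> Prop) : Prop := exists x, I x /\ x <> 0.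

Definition ideal_mul (I J : R -> Prop) : R -> Prop :=
  fun x => forall K, is_ideal K -> (forall a b, I a -> J b -> K (a * b)) -> K x.

Definition ann (I : R -> Prop) : R -> Prop := fun x => forall y, I y -> x * y = 0.

Definition gen_ideal (s : seq R) : R -> Prop :=
  fun x => exists c : 'I_(size s) -> R, x = \sum_(i < size s) c i * s`_i.

Definition noetherian : Prop :=
  forall I, is_ideal I -> exists s : seq R, seteqR I (gen_ideal s).

Definition is_maximal (M : R -> Prop) : Prop :=
  [/\ is_ideal M, ~ M 1 &
      forall J, is_ideal J -> subsetR M J -> ~ J 1 -> seteqR J M].

Definition local_with (m : R -> Prop) : Prop :=
  is_maximal m /\ forall M, is_maximal M -> seteqR M m.

(* dim_{R/m} (M/N) = d, for ideals N ⊆ M with m M ⊆ N: there are elements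
   x_0..x_{d-1} of M whose classes form an R/m-basis of M/N. *)
Definition resdim (m M N : R -> Prop) (d : nat) : Prop :=
  exists x : 'I_d -> R,
    [/\ (forall i, M (x i)),
        (forall y, M y -> exists r : 'I_d -> R, N (y - \sum_(i < d) r i * x i)) &
        (forall r : 'I_d -> R, N (\sum_(i < d) r i * x i) -> forall i, m (r i))].

Definition zero_ideal : R -> Prop := fun x => x = 0.

Definition gorenstein (m : R -> Prop) : Prop := resdim m (ann m) zero_ideal 1.

Definition residue_card (m : R -> Prop) (q : nat) : Prop :=
  exists r : 'I_q -> R,
    (forall i j, m (r i - r j) -> i = j) /\ (forall x, exists i, m (x - r i)).

Definition AG_vertex (I : R -> Prop) : Prop :=
  [/\ is_ideal I, nonzero_set I &
      exists J, [/\ is_ideal J, nonzero_set J & is_zero_set (ideal_mul I J)]].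

(* AG(R) contains a (not necessarily induced) subgraph isomorphic to K_{a,b}:
   a + b pairwise distinct vertices, every vertex of the first part adjacent
   to every vertex of the second part. *)
Definition AG_contains_Kab (a b : nat) : Prop :=
  exists (f : 'I_a -> (R -> Prop)) (g : 'I_b -> (R -> Prop)),
    [/\ (forall i, AG_vertex (f i)) /\ (forall j, AG_vertex (g j)),
        (forall i i', seteqR (f i) (f i') -> i = i'),
        (forall j j', seteqR (g j) (g j') -> j = j'),
        (forall i j, ~ seteqR (f i) (g j)) &
        (forall i j, is_zero_set (ideal_mul (f i) (g j)))].

End Ideals.

Definition prime_power (q : nat) : Prop :=
  exists p n : nat, [/\ prime p, (0 < n)%N & q = (p ^ n)%N].

(* Main.v *)
Require Import Defs.
From HB Require Import structures.
From mathcomp Require Import all_boot all_order all_algebra.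
From Stdlib Require Import Classical.
Set Implicit Arguments. Unset Strict Implicit. Unset Printing Implicit Defensive.
Import GRing.Theory.
Local Open Scope ring_scope.

Definition pid (R : comNzRingType) (a : R) : R -> Prop := fun x => exists r, x = r * a.

Definition indep (R : comNzRingType) (m W : R -> Prop) n (c : 'I_n -> R) :=
  forall t : 'I_n -> R, W (\sum_i t i * c i) -> forall i, m (t i).

Definition Wext (R : comNzRingType) (W : R -> Prop) (b : R) : R -> Prop :=
  fun y => exists r, W (y - r * b).

Lemma peel (R : comNzRingType) (m W : R -> Prop) n (c : 'I_n.+1 -> R) :
  indep m W c -> indep m (Wext W (c ord0)) (fun i => c (lift ord0 i)).
Proof.
move=> H t [r Hr] i.
pose t' := fun j => match unlift ord0 j with None => - r | Some i => t i end.
have := H t' _ (lift ord0 i); rewrite /t' liftK; apply.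
rewrite big_ord_recl unlift_none.
under eq_bigr => j _ do rewrite liftK.
by rewrite addrC mulNr.
Qed.

Definition elimf (R : comNzRingType) n (c : 'I_n.+1 -> R) (p : 'I_n.+1) (u : R) (rho : 'I_n.+1 -> R) : 'I_n -> R :=
  fun i => u * c (lift p i) - rho (lift p i) * c p.

Lemma step_indep (R : comNzRingType) (m W : R -> Prop) n (c : 'I_n.+1 -> R) p u rho :
  (forall s u', m (s * u') -> ~ m u' -> m s) -> indep m W c -> ~ m u ->
  indep m W (elimf c p u rho).
Proof.
move=> Hpr H Hu t Ht i.
pose t' := fun j => match unlift p j with
   None => - \sum_i t i * rho (lift p i) | Some i => t i * u end.
apply: (Hpr _ u) => //.
have := H t' _ (lift p i); rewrite /t' (liftK p i); apply.
rewrite (bigD1_ord p) //= unlift_none.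
rewrite [X in _ + X](eq_bigr (fun j => t j * u * c (lift p j))); last by move=> j _; rewrite liftK.
suff E : \sum_i t i * elimf c p u rho i =
   (- \sum_i t i * rho (lift p i)) * c p + \sum_(i < n) t i * u * c (lift p i).
  by move: Ht; rewrite E.
rewrite /elimf mulNr addrC mulr_suml -sumrB; apply: eq_bigr => j _.
by rewrite mulrBr !mulrA.
Qed.

Lemma step_kill (R : comNzRingType) n (c : 'I_n.+1 -> R) p u rho b :
  (forall i, u * (c i * b) = rho i * (c p * b)) ->
  forall i, elimf c p u rho i * b = 0.
Proof.
move=> H i; rewrite /elimf mulrBl -!mulrA H; by rewrite subrr.
Qed.

Lemma step_keep (R : comNzRingType) n (c : 'I_n.+1 -> R) p u rho b :
  (forall i, c i * b = 0) -> forall i, elimf c p u rho i * b = 0.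
Proof.
move=> H i; rewrite /elimf mulrBl -!mulrA !H; by rewrite !mulr0 subrr.
Qed.

Lemma ideal_neg (R : comNzRingType) (I : R -> Prop) x : is_ideal I -> I x -> I (- x).
Proof. by case=> _ _ H3 Hx; rewrite -mulN1r; apply: H3. Qed.

Lemma step_in (R : comNzRingType) (m : R -> Prop) n (c : 'I_n.+1 -> R) p u rho :
  is_ideal m -> (forall i, m (c i)) -> forall i, m (elimf c p u rho i).
Proof.
move=> Hm H i; have Hm' := Hm; case: Hm' => _ H2 H3.
by rewrite /elimf; apply: H2; [apply: H3 | apply: ideal_neg => //; apply: H3].
Qed.

Lemma choose_pivot (R : comNzRingType) (m : R -> Prop) n (c : 'I_n.+1 -> R) b z :
  ~ m 1 -> (forall i, exists r, c i * b = r * z) -> (forall r, m r -> r * z = 0) ->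
  exists p u rho, ~ m u /\ forall i, u * (c i * b) = rho i * (c p * b).
Proof.
move=> h1 H Hz; have [r Hr] := fin_all_exists H.
case: (classic (exists p, ~ m (r p))) => [[p Hp]|Hn].
  exists p, (r p), r; split => // i; rewrite !Hr !mulrA; congr (_ * _); exact: mulrC.
exists ord0, 1, (fun _ => 0); split => // i.
rewrite Hr Hz ?mul0r ?mulr0 //; apply: NNPP => Hc; apply: Hn; by exists i.
Qed.

Lemma full_step (R : comNzRingType) (m W : R -> Prop) n (c : 'I_n.+1 -> R) b z :
  is_ideal m -> ~ m 1 -> (forall s u', m (s * u') -> ~ m u' -> m s) ->
  (forall i, exists r, c i * b = r * z) -> (forall r, m r -> r * z = 0) ->
  indep m W c -> (forall i, m (c i)) ->
  exists c' : 'I_n -> R, [/\ indep m W c', (forall i, m (c' i)),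
     (forall i, c' i * b = 0) &
     (forall b', (forall i, c i * b' = 0) -> forall i, c' i * b' = 0)].
Proof.
move=> Hm h1 Hpr Hc Hz Hi Hin.
have [p [u [rho [Hu Hr]]]] := choose_pivot h1 Hc Hz.
exists (elimf c p u rho); split.
- exact: step_indep.
- exact: step_in.
- exact: step_kill.
- move=> b' Hb'; exact: step_keep.
Qed.

Lemma noself (R : comNzRingType) (m W : R -> Prop) n (c : 'I_n -> R) i :
  indep m W c -> W (c i) -> m 1.
Proof.
move=> H Hw; have := H (fun j => if j == i then 1 else 0) _ i; rewrite eqxx; apply.
rewrite (bigD1 i) //= eqxx mul1r big1 ?addr0 // => j /negbTE ->; exact: mul0r.
Qed.

Lemma notwo (R : comNzRingType) (m W : R -> Prop) n (c : 'I_n -> R) i j r :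
  indep m W c -> i != j -> W (c i - r * c j) -> m 1.
Proof.
move=> H ij Hw; have := H (fun l => if l == i then 1 else if l == j then - r else 0) _ i.
rewrite eqxx; apply.
have ji : (j == i) = false by rewrite eq_sym (negbTE ij).
rewrite (bigD1 i) //= eqxx mul1r (bigD1 j) /=; last by rewrite ji.
rewrite ji eqxx big1 ?addr0 ?mulNr //.
move=> l /andP [/negbTE -> /negbTE ->]; exact: mul0r.
Qed.

Lemma Wext_lift (R : comNzRingType) (W : R -> Prop) b y : W y -> Wext W b y.
Proof. by exists 0; rewrite mul0r subr0. Qed.

Lemma Wext_self (R : comNzRingType) (W : R -> Prop) b r : W 0 -> Wext W b (r * b).
Proof. by exists r; rewrite subrr. Qed.

Lemma pid_ideal (R : comNzRingType) (a : R) : is_ideal (pid a).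
Proof.
split; first by exists 0; rewrite mul0r.
- by move=> x y [r ->] [s ->]; exists (r + s); rewrite mulrDl.
- by move=> r x [s ->]; exists (r * s); rewrite mulrA.
Qed.

Lemma zero_ideal_ideal (R : comNzRingType) : is_ideal (@zero_ideal R).
Proof.
rewrite /zero_ideal; split => //.
- by move=> x y -> ->; rewrite addr0.
- by move=> r x ->; rewrite mulr0.
Qed.

Lemma pid_mul_zero (R : comNzRingType) (a b : R) :
  a * b = 0 -> is_zero_set (ideal_mul (pid a) (pid b)).
Proof.
move=> H x Hx; apply: (Hx _ (@zero_ideal_ideal R)) => u v [r ->] [s ->].
rewrite /zero_ideal mulrCA -!mulrA H !mulr0; done.
Qed.

Lemma pid_self (R : comNzRingType) (a : R) : pid a a.
Proof. by exists 1; rewrite mul1r. Qed.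

Lemma pid_eq (R : comNzRingType) (a b : R) : seteqR (pid a) (pid b) -> exists r, a = r * b.
Proof. by move=> H; apply/(H a).1/pid_self. Qed.

Theorem lemma2p8 (R : comNzRingType) (m : R -> Prop) (q k : nat) :
  noetherian R -> local_with m -> gorenstein m ->
  prime_power q ->
  ~ is_zero_set (ideal_mul m m) ->
  is_zero_set (ideal_mul (ideal_mul m m) m) ->
  residue_card m q ->
  resdim m m (ideal_mul m m) k ->
  (6 < k)%N ->
  AG_contains_Kab R (k - 6) 3.
Proof.
move=> _ [[Hm h1 Hmax] _] [zz [Hz1 Hz2 Hz3]] _ _ Hm3 _ [x [Hx1 Hx2 Hx3]] Hk.
set M2 := ideal_mul m m.
set z := zz ord0.
have hz : ann m z by exact: Hz1.
have hzspan : forall y, ann m y -> exists r, y = r * z.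
  move=> y /Hz2 [r Hr]; exists (r ord0); move: Hr; rewrite /zero_ideal big_ord1.
  by move/eqP; rewrite subr_eq0 => /eqP.
have hz0 : z <> 0.
  move=> E; apply: h1; apply: (Hz3 (fun _ => 1) _ ord0); rewrite /zero_ideal big_ord1 mul1r.
  exact: E.
have hzm : forall r, m r -> r * z = 0 by move=> r Hr; rewrite mulrC; exact: hz.
have hM2 : forall a b, m a -> m b -> M2 (a * b) by move=> a b Ha Hb K _ HK; exact: HK.
have hM2ann : forall y, M2 y -> ann m y.
  move=> y Hy w Hw; apply: Hm3 => K _ HK; exact: HK.
have hprod : forall a b, m a -> m b -> exists r, a * b = r * z.
  by move=> a b Ha Hb; apply: hzspan; apply: hM2ann; apply: hM2.
have hM20 : M2 0 by move=> K [? _ _] _.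
have Hpr : forall s u', m (s * u') -> ~ m u' -> m s.
  move=> s u Hsu Hu; apply: NNPP => Hs.
  pose J := fun y => exists a t, m a /\ y = a + t * s.
  have HJ : is_ideal J.
    case: Hm => H1 H2 H3; split.
    - by exists 0, 0; rewrite mul0r addr0.
    - move=> y1 y2 [a1 [t1 [Ha1 ->]]] [a2 [t2 [Ha2 ->]]].
      exists (a1 + a2), (t1 + t2); split; first exact: H2.
      by rewrite mulrDl addrACA.
    - move=> r y [a [t [Ha ->]]]; exists (r * a), (r * t); split; first exact: H3.
      by rewrite mulrDr mulrA.
  have HJ1 : forall v, ~ m v -> exists a t, m a /\ 1 = a + t * v.
    move=> v Hv; pose Jv := fun y => exists a t, m a /\ y = a + t * v.
    apply: NNPP => Hn.
    have HJv : is_ideal Jv.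
      case: Hm => H1 H2 H3; split.
      - by exists 0, 0; rewrite mul0r addr0.
      - move=> y1 y2 [a1 [t1 [Ha1 ->]]] [a2 [t2 [Ha2 ->]]].
        exists (a1 + a2), (t1 + t2); split; first exact: H2.
        by rewrite mulrDl addrACA.
      - move=> r y [a [t [Ha ->]]]; exists (r * a), (r * t); split; first exact: H3.
        by rewrite mulrDr mulrA.
    have := Hmax Jv HJv.
    have sub : subsetR m Jv by move=> y Hy; exists y, 0; rewrite mul0r addr0.
    move=> /(_ sub Hn) E; apply: Hv; apply/(E v).1; exists 0, 1.
    by case: Hm => H1 _ _; rewrite mul1r add0r.
  have [a [t [Ha E1]]] := HJ1 s Hs.
  have [a' [t' [Ha' E2]]] := HJ1 u Hu.
  apply: h1; case: Hm => H1 H2 H3.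
  have -> : (1 : R) = a * (a' + t' * u) + (t * s * a' + t * t' * (s * u)).
    transitivity ((a + t * s) * (a' + t' * u)); first by rewrite -E1 -E2 mulr1.
    rewrite mulrDl [(t * s) * _]mulrDr; congr (_ + (_ + _)).
    by rewrite -!mulrA; congr (_ * _); rewrite mulrCA.
  apply: (H2); first by rewrite mulrC; apply: (H3).
  by apply: (H2); apply: (H3).
case: k x Hx1 Hx2 Hx3 Hk => [|[|[|n]]] // x Hx1 _ Hx3 Hk.
have Hi0 : indep m M2 x by exact: Hx3.
set b0 := x ord0.
set c1 := fun i => x (lift ord0 i).
have Hi1 : indep m (Wext M2 b0) c1 := peel Hi0.
set W1 := Wext M2 b0.
set b1 := c1 ord0.
set c2 := fun i => c1 (lift ord0 i).
have Hi2 : indep m (Wext W1 b1) c2 := peel Hi1.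
set W2 := Wext W1 b1.
set b2 := c2 ord0.
set c3 := fun i => c2 (lift ord0 i).
have Hi3 : indep m (Wext W2 b2) c3 := peel Hi2.
set W3 := Wext W2 b2.
have hb0 : m b0 by exact: Hx1.
have hb1 : m b1 by exact: Hx1.
have hb2 : m b2 by exact: Hx1.
have hc3 : forall i, m (c3 i) by move=> i; exact: Hx1.
case: n x Hx1 Hx3 Hk Hi0 @b0 @c1 Hi1 @W1 @b1 @c2 Hi2 @W2 @b2 @c3 Hi3 @W3 hb0 hb1 hb2 hc3
  => [|[|[|n']]] // x Hx1 Hx3 Hk Hi0 b0 c1 Hi1 W1 b1 c2 Hi2 W2 b2 c3 Hi3 W3 hb0 hb1 hb2 hc3.
have -> : (n'.+3.+3 - 6 = n')%N by rewrite !subSS subn0.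
have [d1 [Hd1i Hd1m Hd1k _]] := full_step Hm h1 Hpr (fun i => hprod _ _ (hc3 i) hb0) hzm Hi3 hc3.
have [d2 [Hd2i Hd2m Hd2k Hd2p]] := full_step Hm h1 Hpr (fun i => hprod _ _ (Hd1m i) hb1) hzm Hd1i Hd1m.
have [d3 [Hd3i Hd3m Hd3k Hd3p]] := full_step Hm h1 Hpr (fun i => hprod _ _ (Hd2m i) hb2) hzm Hd2i Hd2m.
have Hd3k0 : forall i, d3 i * b0 = 0 by apply: Hd3p; apply: Hd2p.
have Hd3k1 : forall i, d3 i * b1 = 0 by apply: Hd3p.
have W10 : W1 0 by apply: Wext_lift.
have W20 : W2 0 by apply: Wext_lift.
have W30 : W3 0 by apply: Wext_lift.
pose bb := fun j : 'I_3 => if val j == 0%N then b0 else if val j == 1%N then b1 else b2.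
have hbb : forall j, m (bb j) by move=> j; rewrite /bb; case: ifP => // _; case: ifP.
have W3bb : forall j r, W3 (r * bb j).
  move=> j r; rewrite /bb; case: ifP => _.
    by apply: Wext_lift; apply: Wext_lift; apply: Wext_self.
  case: ifP => _; last by apply: Wext_self.
  by apply: Wext_lift; apply: Wext_self.
have Hkill : forall i j, d3 i * bb j = 0.
  by move=> i j; rewrite /bb; case: ifP => _ //; case: ifP.
have vert : forall a, m a -> a <> 0 -> AG_vertex (pid a).
  move=> a Ha Ha0; split; first exact: pid_ideal.
    by exists a; split => //; apply: pid_self.
  exists (pid z); split; first exact: pid_ideal.
    by exists z; split => //; apply: pid_self.
  apply: pid_mul_zero; rewrite mulrC; exact: hz.
exists (fun i => pid (d3 i)), (fun j => pid (bb j)); split.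
- split => i.
    apply: vert => // E; apply: h1; apply: (noself (i := i) Hd3i); by rewrite E.
  apply: vert => //; rewrite /bb; case: ifP => _.
    by move=> E; apply: h1; apply: (noself (i := ord0) Hi0); rewrite -/b0 E.
  case: ifP => _ E.
    by apply: h1; apply: (noself (i := ord0) Hi1); rewrite -/b1 E; apply: W10.
  by apply: h1; apply: (noself (i := ord0) Hi2); rewrite -/b2 E; apply: W20.
- move=> i i' /pid_eq [r E]; apply: NNPP => ne; apply: h1.
  apply: (notwo (r := r) Hd3i (i := i) (j := i')); first by apply/eqP.
  by rewrite E subrr.
- move=> j j' H.
  have [r E] := pid_eq H.
  have [r' E'] : exists r, bb j' = r * bb j by apply/(H (bb j')).2/pid_self.
  have c10 : forall r, b1 = r * b0 -> False.
    move=> r0 e; apply: h1; apply: (noself (i := ord0) Hi1).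
    by rewrite -/b1 e; apply: Wext_self.
  have c20 : forall r, b2 = r * b0 -> False.
    move=> r0 e; apply: h1; apply: (noself (i := ord0) Hi2).
    by rewrite -/b2 e; apply: Wext_lift; apply: Wext_self.
  have c21 : forall r, b2 = r * b1 -> False.
    move=> r0 e; apply: h1; apply: (noself (i := ord0) Hi2).
    by rewrite -/b2 e; apply: Wext_self.
  clear H; case: j E E' => [[|[|[|jj]]] Hj] //; case: j' => [[|[|[|jj']]] Hj'] //;
    rewrite /bb /= => E E'; try (by apply/val_inj);
    solve [ exfalso; by [apply: c10 E | apply: c10 E' | apply: c20 E | apply: c20 E'
                        | apply: c21 E | apply: c21 E'] ].
- move=> i j /pid_eq [r E]; apply: h1; apply: (noself (i := i) Hd3i); rewrite E.
  exact: W3bb.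
- move=> i j; apply: pid_mul_zero; exact: Hkill.
Qed.
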